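(* An interval order is better-quasi-ordered if and only if it is well-quasi-ordered.
   Context: A poset $P$ is an interval order if it is isomorphic to a set of nonempty intervals of some chain $C$, ordered by $I<J$ iff $x<y$ for every $x\in I$ and every $y\in J$. A quasi-ordered set is well-quasi-ordered (wqo) if it is well-founded and has no infinite antichain. Barriers and bqo: finite subsets of $\mathbb{N}$ are identified with their increasing enumerations. For finite $s,t\subseteq\mathbb{N}$ write $s\triangleleft t$ if there is a finite $r\subseteq\mathbb{N}$ such that $s$ is a proper initial segment of $r$ and $t$ is $r$ with its least element removed. A barrier is an infinite set $B$ of finite subsets of $\mathbb{N}$, no member of which is a proper subset of another, such that every infinite $X\subseteq\bigcup B$ has a nonempty initial segment belonging to $B$. A barrier is well-ordered by the lexicographic order; its order type is the type of this well-order. A map $f$ from a barrier $B$ into a quasi-ordered set $Q$ is good if there exist $s,t\in B$ with $s\triangleleft t$ and $f(s)\leq f(t)$, and bad otherwise. For a countable ordinal $\alpha$, $Q$ is $\alpha$-bqo if every map from a barrier of order type at most $\alpha$ into $Q$ is good; $Q$ is better-quasi-ordered (bqo) if it is $\alpha$-bqo for every countable ordinal $\alpha$. *)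

(* Defs.v *)
From mathcomp Require Import all_boot.
Set Implicit Arguments. Unset Strict Implicit. Unset Printing Implicit Defensive.

Definition quasi_order (T : Type) (le : T -> T -> Prop) : Prop :=
  (forall x, le x x) /\ (forall x y z, le x y -> le y z -> le x z).

Definition partial_order (T : Type) (le : T -> T -> Prop) : Prop :=
  quasi_order le /\ (forall x y, le x y -> le y x -> x = y).

Definition total_order (C : Type) (le : C -> C -> Prop) : Prop :=
  partial_order le /\ (forall a b, le a b \/ le b a).

Definition nonempty_interval (C : Type) (leC : C -> C -> Prop) (I : C -> Prop) :=
  (exists c, I c) /\
  (forall a b c, I a -> I b -> leC a c -> leC c b -> I c).

Definition interval_order (T : Type) (le : T -> T -> Prop) : Prop :=
  partial_order le /\
  exists (C : Type) (leC : C -> C -> Prop) (I : T -> C -> Prop),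
    total_order leC /\
    (forall x, nonempty_interval leC (I x)) /\
    (forall x y, (forall c, I x c <-> I y c) -> x = y) /\
    (forall x y, le x y <->
       (x = y \/ forall a b, I x a -> I y b -> leC a b /\ a <> b)).

Definition strict (T : Type) (le : T -> T -> Prop) (x y : T) : Prop :=
  le x y /\ ~ le y x.

Definition wqo (T : Type) (le : T -> T -> Prop) : Prop :=
  (~ exists f : nat -> T, forall n, strict le (f n.+1) (f n)) /\
  (~ exists f : nat -> T, forall i j, i <> j -> ~ le (f i) (f j)).

(* Finite subsets of nat are identified with strictly increasing lists. *)
Definition fin_nat_set (s : seq nat) : Prop := sorted ltn s.

Definition infinite_nat_set (X : nat -> Prop) : Prop :=
  forall n, exists m, n <= m /\ X m.

Definition nonempty_initial_segment (s : seq nat) (X : nat -> Prop) : Prop :=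
  fin_nat_set s /\ s <> [::] /\
  (forall x, x \in s -> X x) /\
  (forall x, X x -> x <= last 0 s -> x \in s).

Definition barrier (B : seq nat -> Prop) : Prop :=
  (forall s, B s -> fin_nat_set s) /\
  (~ exists l : seq (seq nat), forall s, B s -> s \in l) /\
  (forall s t, B s -> B t -> {subset s <= t} -> {subset t <= s}) /\
  (forall X : nat -> Prop,
      infinite_nat_set X ->
      (forall n, X n -> exists s, B s /\ n \in s) ->
      exists s, B s /\ nonempty_initial_segment s X).

Definition shift_rel (s t : seq nat) : Prop :=
  exists r : seq nat, fin_nat_set r /\
    (exists k, k < size r /\ s = take k r) /\
    r <> [::] /\ t = behead r.

Definition good (T : Type) (le : T -> T -> Prop) (B : seq nat -> Prop)
    (f : seq nat -> T) : Prop :=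
  exists s t, B s /\ B t /\ shift_rel s t /\ le (f s) (f t).

(* bqo: every map from a barrier (of any, necessarily countable, order type)
   into Q is good. *)
Definition bqo (T : Type) (le : T -> T -> Prop) : Prop :=
  forall B : seq nat -> Prop, barrier B -> forall f : seq nat -> T, good le B f.

(* Main.v *)
Require Import Defs.
From mathcomp Require Import all_boot zify.
From Stdlib Require Import Classical ClassicalEpsilon.
Set Implicit Arguments. Unset Strict Implicit. Unset Printing Implicit Defensive.

(* Using a Galvin-Prikry style Ramsey theorem for clopen partitions (GP),
     the 2+2-freeness of interval orders (chain of strict up-sets) and the
     wqo hypotheses, an iteration decreasing the length of the determining
     prefix gives a contradiction (MT). *)

Definition incr (f : nat -> nat) := forall i, f i < f i.+1.
Definition sub (A B : nat -> nat) := incr A /\ forall i, exists j, A i = B j.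
Definition sh (f : nat -> nat) := fun i => f i.+1.
Definition shn (k : nat) (f : nat -> nat) := fun i => f (k + i).
Definition agree p (f g : nat -> nat) := forall i, i < p -> f i = g i.
Definition catf (s : seq nat) (f : nat -> nat) :=
  fun i => if i < size s then nth 0 s i else f (i - size s).
Definition feq (f g : nat -> nat) := forall i, f i = g i.

Lemma incr_lt f : incr f -> forall i j, i < j -> f i < f j.
Proof.
move=> Hf i j; elim: j => // j IH; rewrite ltnS leq_eqVlt => /orP[/eqP->|/IH H].
  exact: Hf.
exact: ltn_trans H (Hf j).
Qed.

Lemma incr_le f : incr f -> forall i j, i <= j -> f i <= f j.
Proof.
move=> Hf i j; rewrite leq_eqVlt => /orP[/eqP->//|H]; exact/ltnW/incr_lt.
Qed.

Lemma incr_ltE f : incr f -> forall i j, (f i < f j) = (i < j).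
Proof.
move=> Hf i j; apply/idP/idP; last exact: incr_lt.
by apply: contraLR; rewrite -!leqNgt; apply: incr_le.
Qed.

Lemma incr_leE f : incr f -> forall i j, (f i <= f j) = (i <= j).
Proof. by move=> Hf i j; rewrite leqNgt (incr_ltE Hf) -leqNgt. Qed.

Lemma incr_inj f i j : incr f -> f i = f j -> i = j.
Proof. by move=> Hf E; apply/eqP; rewrite eqn_leq -(incr_leE Hf i j) -(incr_leE Hf j i) E leqnn. Qed.

Lemma incr_id f : incr f -> forall i, i <= f i.
Proof. move=> Hf; elim=> // i IH; exact: leq_ltn_trans IH (Hf i). Qed.

Lemma sub_refl A : incr A -> sub A A.
Proof. by move=> H; split => // i; exists i. Qed.

Lemma sub_trans A B C : sub A B -> sub B C -> sub A C.
Proof.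
move=> [HA HAB] [_ HBC]; split => // i; case: (HAB i) => j ->; exact: HBC.
Qed.

Lemma sub_incr A B : sub A B -> incr A.
Proof. by case. Qed.

Lemma incr_sh f : incr f -> incr (sh f).
Proof. by move=> H i; apply: H. Qed.

Lemma incr_shn k f : incr f -> incr (shn k f).
Proof. by move=> H i; rewrite /shn addnS; apply: H. Qed.

Lemma sub_sh A : incr A -> sub (sh A) A.
Proof. by move=> H; split; [exact: incr_sh| move=> i; exists i.+1]. Qed.

Lemma sub_shn k A : incr A -> sub (shn k A) A.
Proof. by move=> H; split; [exact: incr_shn| move=> i; exists (k + i)]. Qed.

Lemma incr_feq A A' : incr A -> feq A A' -> incr A'.
Proof. by move=> H E i; rewrite -!E. Qed.

Lemma sub_feq A A' B : sub A B -> feq A A' -> sub A' B.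
Proof.
move=> [H1 H2] E; split; first exact: incr_feq E.
by move=> i; rewrite -E.
Qed.

Lemma sub_feqr A B B' : sub A B -> feq B B' -> sub A B'.
Proof.
move=> [H1 H2] E; split=> // i; case: (H2 i) => j ->; by exists j.
Qed.

Lemma sub_index A B : sub A B -> incr B ->
  exists k, incr k /\ feq A (fun i => B (k i)).
Proof.
move=> [HA HAB] HB.
pose k i := proj1_sig (constructive_indefinite_description _ (HAB i)).
have Ek i : A i = B (k i) by rewrite /k; case: constructive_indefinite_description.
exists k; split => // i.
by rewrite -(incr_ltE HB) -!Ek; apply: HA.
Qed.

Lemma sub_comp k B : incr k -> incr B -> sub (fun i => B (k i)) B.
Proof. move=> Hk HB; split; last by move=> i; exists (k i).
by move=> i; rewrite (incr_ltE HB). Qed.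

Lemma agree_le p q f g : agree p f g -> q <= p -> agree q f g.
Proof. by move=> H Hq i Hi; apply: H; exact: leq_trans Hi Hq. Qed.

Lemma agree_sym p f g : agree p f g -> agree p g f.
Proof. by move=> H i Hi; rewrite H. Qed.

Lemma agree_trans p f g h : agree p f g -> agree p g h -> agree p f h.
Proof. by move=> H1 H2 i Hi; rewrite H1 ?H2. Qed.

Definition clo (X : Type) (F : (nat -> nat) -> X) (V : nat -> nat) :=
  forall T, sub T V -> exists p, forall T', sub T' V -> agree p T T' -> F T' = F T.
Definition cloP (c : (nat -> nat) -> Prop) (V : nat -> nat) :=
  forall T, sub T V -> exists p, forall T', sub T' V -> agree p T T' -> (c T' <-> c T).

Lemma clo_feq X (F : (nat -> nat) -> X) V T T' :
  clo F V -> sub T V -> feq T T' -> F T' = F T.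
Proof.
move=> H HT E; case: (H T HT) => p Hp; apply: Hp; first exact: sub_feq E.
by move=> i _; rewrite E.
Qed.

Lemma cloP_feq c V T T' : cloP c V -> sub T V -> feq T T' -> (c T' <-> c T).
Proof.
move=> H HT E; case: (H T HT) => p Hp; apply: Hp; first exact: sub_feq E.
by move=> i _; rewrite E.
Qed.

Lemma clo_sub X (F : (nat -> nat) -> X) V Y : clo F V -> sub Y V -> clo F Y.
Proof.
move=> H HY T HT; case: (H T (sub_trans HT HY)) => p Hp; exists p => T' HT'.
exact/Hp/(sub_trans HT' HY).
Qed.

Lemma cloP_sub c V Y : cloP c V -> sub Y V -> cloP c Y.
Proof.
move=> H HY T HT; case: (H T (sub_trans HT HY)) => p Hp; exists p => T' HT'.
exact/Hp/(sub_trans HT' HY).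
Qed.

Lemma clo_sh X (F : (nat -> nat) -> X) V : clo F V -> clo (fun T => F (sh T)) V.
Proof.
move=> H T HT; have HT1 : sub (sh T) V by apply: sub_trans (sub_sh (sub_incr HT)) HT.
case: (H _ HT1) => p Hp; exists p.+1 => T' HT' Ag; apply: Hp.
  exact: sub_trans (sub_sh (sub_incr HT')) HT'.
by move=> i Hi; apply: Ag.
Qed.

Lemma cloP2 X Y (F : (nat -> nat) -> X) (G : (nat -> nat) -> Y) (R : X -> Y -> Prop) V :
  clo F V -> clo G V -> cloP (fun T => R (F T) (G T)) V.
Proof.
move=> HF HG T HT; case: (HF T HT) => p Hp; case: (HG T HT) => q Hq.
exists (maxn p q) => T' HT' Ag.
rewrite Hp ?Hq //; [exact: agree_le Ag (leq_maxr _ _)| exact: agree_le Ag (leq_maxl _ _)].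
Qed.

Lemma cloP1 X (F : (nat -> nat) -> X) (P : X -> Prop) V :
  clo F V -> cloP (fun T => P (F T)) V.
Proof.
move=> HF T HT; case: (HF T HT) => p Hp; exists p => T' HT' Ag; by rewrite Hp.
Qed.

Lemma sorted_rcons_iff s k :
  sorted ltn (rcons s k) = sorted ltn s && all (fun x => x < k) s.
Proof.
rewrite -cats1 !(sorted_pairwise ltn_trans) pairwise_cat allrel1r /=.
by rewrite andbT andbC.
Qed.

Lemma sorted_rcons s k : sorted ltn s -> (forall x, x \in s -> x < k) ->
  sorted ltn (rcons s k).
Proof. by move=> H1 H2; rewrite sorted_rcons_iff H1; apply/allP. Qed.

Lemma sorted_rcons_lt s k x : sorted ltn (rcons s k) -> x \in s -> x < k.
Proof. by rewrite sorted_rcons_iff => /andP[_ /allP H]; apply: H. Qed.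

Lemma catf_nil f : feq (catf [::] f) f.
Proof. by move=> i; rewrite /catf /= subn0. Qed.

Lemma incr_catf s f : sorted ltn s -> incr f -> (forall x, x \in s -> x < f 0) ->
  incr (catf s f).
Proof.
move=> Hs Hf Hx i; rewrite /catf.
case: (ltnP i.+1 (size s)) => H1.
  have H2 : i < size s by exact: ltn_trans (ltnSn i) H1.
  rewrite H2; apply: (sorted_ltn_nth ltn_trans 0 Hs) => //.
case: (ltnP i (size s)) => H2.
  have -> : i.+1 - size s = 0 by apply/eqP; rewrite subn_eq0.
  by apply: Hx; exact: mem_nth.
by rewrite subSn //; exact: Hf.
Qed.

Lemma catf_rcons s x g : g 0 = x -> feq (catf s g) (catf (rcons s x) (sh g)).
Proof.
move=> Hx i; rewrite /catf size_rcons nth_rcons.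
case: (ltngtP i (size s)) => H.
- by rewrite (ltn_trans H (ltnSn _)).
- have h1 : (i < size s) = false by rewrite ltnNge (ltnW H).
  have h2 : (i < (size s).+1) = false by rewrite ltnS leqNgt H.
  rewrite h2 /sh; congr g.
  by rewrite subnS prednK // subn_gt0.
- by rewrite H ltnSn subnn.
Qed.

Fixpoint subseqs (l : seq nat) : seq (seq nat) :=
  if l is x :: l' then [seq x :: s | s <- subseqs l'] ++ subseqs l' else [:: [::]].

Lemma mem_subseqs s l : (s \in subseqs l) = subseq s l.
Proof.
elim: l s => [|x l IH] s /=.
  by rewrite inE; case: s.
case: s => [|y s]; rewrite mem_cat IH.
  by rewrite sub0seq orbT.
have Hinj : injective (cons x) by move=> a b [].
case: (eqVneq y x) => [->|Hne].
  rewrite (mem_map Hinj) IH.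
  apply/idP/idP; last by move=> ->.
  by case/orP=> // H; apply: subseq_trans (subseq_cons _ _) H.
apply/idP/idP; last by move=> ->; rewrite orbT.
case/orP=> // /mapP[t _ [E _]]; by rewrite E eqxx in Hne.
Qed.

Lemma subseq_rcons_inv (s t : seq nat) x : subseq s (rcons t x) ->
  subseq s t \/ exists s', s = rcons s' x /\ subseq s' t.
Proof.
rewrite -subseq_rev rev_rcons.
case Er: (rev s) => [|y r].
  by move=> _; left; rewrite (_ : s = [::]) ?sub0seq // -(revK s) Er.
rewrite /= ; case: eqP => [Eyx|_] H.
  right; exists (rev r); split.
    by rewrite -(revK s) Er -Eyx rev_cons.
  by rewrite -subseq_rev revK.
left; by rewrite -subseq_rev Er.
Qed.

Lemma subseq_iota l k : sorted ltn l -> (forall x, x \in l -> x < k) ->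
  subseq l (iota 0 k).
Proof.
move=> Hs Hk.
have -> : l = filter (mem l) (iota 0 k).
  apply: (irr_sorted_eq ltn_trans ltnn) => //.
    by apply: sorted_filter; [exact: ltn_trans| exact: iota_ltn_sorted].
  move=> x; rewrite mem_filter mem_iota /= add0n.
  by case H: (x \in l) => //=; rewrite Hk.
exact: filter_subseq.
Qed.

Definition tl (s : seq nat) := foldr (fun x m => maxn x.+1 m) 0 s.

Lemma tl_gt s x : x \in s -> x < tl s.
Proof.
elim: s => // y s IH; rewrite inE /= => /orP[/eqP->|/IH H].
  exact: leq_maxl.
exact: leq_trans H (leq_maxr _ _).
Qed.

Lemma tl_le s t : (forall x, x \in s -> x < t) -> tl s <= t.
Proof.
elim: s => // y s IH H /=; rewrite geq_max H ?inE ?eqxx //.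
by apply: IH => x Hx; apply: H; rewrite inE Hx orbT.
Qed.

Lemma tl_rcons s j : sorted ltn (rcons s j) -> tl (rcons s j) = j.+1.
Proof.
move=> Hs; apply/eqP; rewrite eqn_leq; apply/andP; split.
  apply: tl_le => x; rewrite mem_rcons inE => /orP[/eqP->//|Hx].
  exact: ltnW (sorted_rcons_lt Hs Hx).
by apply: tl_gt; rewrite mem_rcons inE eqxx.
Qed.

Lemma sub_id T : incr T -> sub T id.
Proof. by move=> H; split => // i; exists (T i). Qed.

Fixpoint itr (e : nat -> nat) (i : nat) : nat :=
  if i is i'.+1 then e (itr e i').+1 else e 0.

Lemma itr_incr e : (forall J, J <= e J) -> incr (itr e).
Proof. by move=> He i /=; apply: He. Qed.

Lemma itr_range e i : exists J, itr e i = e J.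
Proof. by case: i => [|i] /=; eexists. Qed.

Section GPid.
Variable c : (nat -> nat) -> Prop.
Hypothesis Hc : cloP c id.

Definition acc s M := forall g, sub g M -> c (catf s g).
Definition rej s M := forall N, sub N M -> ~ acc s N.
Definition dec s M := acc s M \/ rej s M.

Lemma acc_sub s M N : acc s M -> sub N M -> acc s N.
Proof. by move=> H HN g Hg; apply: H; apply: sub_trans Hg HN. Qed.

Lemma rej_sub s M N : rej s M -> sub N M -> rej s N.
Proof. by move=> H HN N' HN'; apply: H; apply: sub_trans HN' HN. Qed.

Lemma dec_sub s M N : dec s M -> sub N M -> dec s N.
Proof. by case=> H HN; [left; apply: acc_sub H HN| right; apply: rej_sub H HN]. Qed.

Lemma D1 s M : incr M -> exists N, sub N M /\ dec s N.
Proof.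
move=> HM; case: (classic (exists N, sub N M /\ acc s N)) => [[N [H1 H2]]|H].
  by exists N; split => //; left.
exists M; split; first exact: sub_refl HM.
by right => N HN HA; apply: H; exists N.
Qed.

Lemma D1L (L : seq (seq nat)) M : incr M ->
  exists N, sub N M /\ forall s, s \in L -> dec s N.
Proof.
elim: L M => [|s L IH] M HM.
  by exists M; split; [exact: sub_refl HM|].
case: (IH M HM) => N1 [HN1 H1].
case: (D1 s (sub_incr HN1)) => N2 [HN2 H2].
exists N2; split; first exact: sub_trans HN2 HN1.
move=> s'; rewrite inE => /orP[/eqP->//|Hs'].
exact: dec_sub (H1 _ Hs') HN2.
Qed.

Lemma D1L' (L : seq (seq nat)) M :
  exists N, incr M -> sub N M /\ forall s, s \in L -> dec s N.
Proof.
case: (classic (incr M)) => H.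
  by case: (D1L L H) => N HN; exists N.
by exists M.
Qed.

Definition pick_dec L M := proj1_sig (constructive_indefinite_description _ (D1L' L M)).

Lemma pick_decP L M : incr M ->
  sub (pick_dec L M) M /\ forall s, s \in L -> dec s (pick_dec L M).
Proof. by rewrite /pick_dec; case: constructive_indefinite_description. Qed.

Fixpoint fus (k : nat) : seq nat * (nat -> nat) :=
  if k is k'.+1 then let st := fus k' in
    (rcons st.1 (st.2 0),
     pick_dec [seq rcons s (st.2 0) | s <- subseqs st.1] (sh st.2))
  else ([::], pick_dec [:: [::]] id).

Definition Nf k := (fus k).2 0.

Lemma incr_id0 : incr id.
Proof. by move=> i. Qed.

Lemma fus_incr k : incr (fus k).2 /\ sub (fus k.+1).2 (sh (fus k).2).
Proof.
have H0 : incr (fus 0).2 by exact: sub_incr (proj1 (pick_decP [:: [::]] incr_id0)).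
elim: k => [|k [IH1 IH2]].
  by split => //; exact: (proj1 (pick_decP _ (incr_sh H0))).
have H1 := sub_incr IH2.
by split => //; exact: (proj1 (pick_decP _ (incr_sh H1))).
Qed.


Lemma fus_inc k : incr (fus k).2.
Proof. exact: (fus_incr k).1. Qed.

Lemma fus_sub k d : sub (fus (k + d)).2 (fus k).2.
Proof.
elim: d => [|d IH]; first by rewrite addn0; exact: sub_refl (fus_inc k).
rewrite addnS; apply: sub_trans IH.
exact: sub_trans (fus_incr _).2 (sub_sh (fus_inc _)).
Qed.

Lemma Nf_incr : incr Nf.
Proof.
move=> k; case: (fus_incr k) => H1 [_ H2]; case: (H2 0) => j.
by rewrite /Nf => ->; rewrite /sh; exact: incr_lt H1 _ _ (ltn0Sn j).
Qed.

Lemma Nf_shn_sub k : sub (shn k Nf) (fus k).2.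
Proof.
split; first exact: incr_shn Nf_incr.
move=> i; case: ((fus_sub k i).2 0) => j E; exists j; by rewrite /shn /Nf E.
Qed.

Lemma fus_pre k : (fus k).1 = map Nf (iota 0 k).
Proof.
elim: k => // k IH; rewrite -addn1 iotaD map_cat add0n cats1 -IH.
by rewrite addn1.
Qed.

Lemma Nf_dec0 : dec [::] Nf.
Proof.
have H := (pick_decP [:: [::]] incr_id0).2 [::] (mem_head _ _).
apply: dec_sub H _; apply: sub_feq (Nf_shn_sub 0) _.
by move=> i; rewrite /shn add0n.
Qed.

Lemma Nf_dec xs k : sorted ltn (rcons xs k) ->
  dec (map Nf (rcons xs k)) (shn k.+1 Nf).
Proof.
move=> Hs; have Hs' : sorted ltn xs by move: Hs; rewrite sorted_rcons_iff => /andP[].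
have Hsub : subseq xs (iota 0 k).
  by apply: subseq_iota => // x; exact: sorted_rcons_lt Hs.
have Hm : map Nf xs \in subseqs (fus k).1 by rewrite mem_subseqs fus_pre; exact: map_subseq.
have HL : map Nf (rcons xs k) \in [seq rcons s ((fus k).2 0) | s <- subseqs (fus k).1].
  by rewrite map_rcons; apply: (map_f (fun s => rcons s ((fus k).2 0))).
have Hd : dec (map Nf (rcons xs k)) (fus k.+1).2 :=
  (pick_decP _ (incr_sh (fus_inc k))).2 _ HL.
exact: dec_sub Hd (Nf_shn_sub k.+1).
Qed.

Definition R xs := rej (map Nf xs) (shn (tl xs) Nf).

Lemma sorted_mapNf xs : sorted ltn xs -> sorted ltn (map Nf xs).
Proof. by move=> H; apply: homo_sorted H => x y Hxy; apply: incr_lt Nf_incr _ _ Hxy. Qed.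

Lemma D3 xs : sorted ltn xs -> R xs ->
  exists J, forall j, J <= j -> tl xs <= j -> R (rcons xs j).
Proof.
move=> Hs HR; apply: NNPP => HJ.
have Hsr j : tl xs <= j -> sorted ltn (rcons xs j).
  by move=> Hj; apply: sorted_rcons => // x /tl_gt Hx; exact: leq_trans Hx Hj.
have Hex : forall J, exists j,
    [/\ J <= j, tl xs <= j & acc (map Nf (rcons xs j)) (shn j.+1 Nf)].
  move=> J; apply: NNPP => H; apply: HJ; exists J => j HJj Htj.
  have Ht := tl_rcons (Hsr j Htj).
  rewrite /R Ht; case: (Nf_dec (Hsr j Htj)) => // Hacc.
  by exfalso; apply: H; exists j.
pose e J := proj1_sig (constructive_indefinite_description _ (Hex J)).
have He J : [/\ J <= e J, tl xs <= e J & acc (map Nf (rcons xs (e J))) (shn (e J).+1 Nf)].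
  by rewrite /e; case: constructive_indefinite_description.
pose ks := itr e.
have Hks : incr ks by apply: itr_incr => J; case: (He J).
have Hks2 i : tl xs <= ks i /\ acc (map Nf (rcons xs (ks i))) (shn (ks i).+1 Nf).
  by rewrite /ks; case: (itr_range e i) => J ->; case: (He J).
pose K := fun i => Nf (ks i).
have HK : incr K by move=> i; rewrite /K (incr_ltE Nf_incr).
apply: (HR K).
  split => // i; exists (ks i - tl xs); by rewrite /shn subnKC //; case: (Hks2 i).
move=> g Hg.
case: (sub_index Hg HK) => kk [Hkk Eg].
set j0 := ks (kk 0).
case: (Hks2 (kk 0)) => Htj0 Hacc0.
have Hshg : sub (sh g) (shn j0.+1 Nf).
  split; first exact: incr_sh (sub_incr Hg).
  move=> i; exists (ks (kk i.+1) - j0.+1); rewrite /sh /shn Eg /K subnKC //.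
  by rewrite (incr_ltE Hks) (incr_ltE Hkk).
have Hc0 := Hacc0 _ Hshg.
have Hinc : incr (catf (map Nf xs) g).
  apply: incr_catf.
  - exact: sorted_mapNf.
  - exact: sub_incr Hg.
  - move=> x /mapP[y Hy ->]; rewrite Eg /K (incr_ltE Nf_incr).
    exact: leq_trans (tl_gt Hy) Htj0.
have Hg0 : g 0 = Nf j0 by rewrite Eg.
apply/(cloP_feq Hc (sub_id Hinc) (catf_rcons (map Nf xs) Hg0)).
by rewrite -map_rcons.
Qed.

Lemma D3L (L : seq (seq nat)) : (forall xs, xs \in L -> sorted ltn xs /\ R xs) ->
  exists J, forall xs, xs \in L -> forall j, J <= j -> tl xs <= j -> R (rcons xs j).
Proof.
elim: L => [|xs L IH] H; first by exists 0.
case: IH => [x Hx|J0 HJ0]; first by apply: H; rewrite inE Hx orbT.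
case: (H xs (mem_head _ _)) => Hs HRis; case: (D3 Hs HRis) => J1 HJ1.
exists (maxn J0 J1) => x; rewrite inE => /orP[/eqP->|Hx] j Hj Ht.
  by apply: HJ1 => //; exact: leq_trans (leq_maxr _ _) Hj.
by apply: HJ0 => //; exact: leq_trans (leq_maxl _ _) Hj.
Qed.

Definition InvZ pre := sorted ltn pre /\ forall xs, subseq xs pre -> R xs.

Lemma nxt_ex pre : exists j, InvZ pre -> tl pre <= j /\ InvZ (rcons pre j).
Proof.
case: (classic (InvZ pre)) => [[Hs HR]|]; last by exists 0.
case: (D3L (L := subseqs pre) _) => [xs|J HJ].
  rewrite mem_subseqs => Hsub; split; last exact: HR.
  by apply: (subseq_sorted _ Hsub Hs); exact: ltn_trans.
exists (maxn J (tl pre)) => _; split; first exact: leq_maxr.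
split.
  by apply: sorted_rcons => // x /tl_gt H; exact: leq_trans H (leq_maxr _ _).
move=> xs /subseq_rcons_inv [H|[xs' [-> H]]]; first exact: HR.
apply: HJ; [by rewrite mem_subseqs| exact: leq_maxl| ].
apply: tl_le => x Hx; exact: leq_trans (tl_gt (mem_subseq H Hx)) (leq_maxr _ _).
Qed.

Definition nxt pre := proj1_sig (constructive_indefinite_description _ (nxt_ex pre)).

Lemma nxtP pre : InvZ pre -> tl pre <= nxt pre /\ InvZ (rcons pre (nxt pre)).
Proof. by rewrite /nxt; case: constructive_indefinite_description. Qed.

Fixpoint zp k := if k is k'.+1 then rcons (zp k') (nxt (zp k')) else [::].
Definition zs k := nxt (zp k).

Lemma zp_inv : R [::] -> forall k, InvZ (zp k).
Proof.
move=> H0; elim => [|k IH].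
  by split => // xs; rewrite subseq0 => /eqP ->.
exact: (nxtP IH).2.
Qed.

Lemma zp_map k : zp k = map zs (iota 0 k).
Proof.
elim: k => // k IH; rewrite -addn1 iotaD map_cat add0n cats1 -IH.
by rewrite addn1.
Qed.

Lemma zs_incr : R [::] -> incr zs.
Proof.
move=> H0 k; have [H1 _] := nxtP (zp_inv H0 k.+1).
apply: leq_trans H1; apply: tl_gt; by rewrite /= mem_rcons inE eqxx.
Qed.

Lemma D4 : R [::] -> forall g, sub g (fun i => Nf (zs i)) -> ~ c g.
Proof.
move=> H0 g Hg Hcg.
have Hz := zs_incr H0.
have HZ : incr (fun i => Nf (zs i)) by move=> i; rewrite (incr_ltE Nf_incr); exact: Hz.
case: (sub_index Hg HZ) => kk [Hkk Eg].
have Hgi := sub_incr Hg.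
case: (Hc (sub_id Hgi)) => p Hp.
pose xs := map (fun i => zs (kk i)) (iota 0 p).
have Hsis : sorted ltn xs.
  by apply: homo_sorted (iota_ltn_sorted 0 p) => x y H; apply: incr_lt Hz _ _ _; apply: incr_lt Hkk _ _ H.
have HRis : R xs.
  have Hsub : subseq xs (zp (kk p)).
    rewrite zp_map /xs (map_comp zs kk); apply: map_subseq; apply: subseq_iota.
      by apply: homo_sorted (iota_ltn_sorted 0 p) => x y H; apply: incr_lt Hkk _ _ H.
    move=> x /mapP[y]; rewrite mem_iota add0n => /andP[_ Hy] ->.
    by rewrite (incr_ltE Hkk).
  exact: (zp_inv H0 (kk p)).2 _ Hsub.
apply: (HRis (shn p g)).
  split; first exact: incr_shn Hgi.
  move=> i; exists (zs (kk (p + i)) - tl xs); rewrite /shn Eg subnKC //.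
  apply: tl_le => x /mapP[y]; rewrite mem_iota add0n => /andP[_ Hy] ->.
  by rewrite (incr_ltE Hz) (incr_ltE Hkk); exact: leq_trans Hy (leq_addr _ _).
move=> g' Hg'.
have Hsz : size (map Nf xs) = p by rewrite !size_map size_iota.
have Hinc : incr (catf (map Nf xs) g').
  apply: incr_catf.
  - exact: sorted_mapNf.
  - exact: sub_incr Hg'.
  - move=> x /mapP[y /mapP[z]]; rewrite mem_iota add0n => /andP[_ Hz'] -> ->.
    case: Hg' => _ /(_ 0) [j ->]; rewrite /shn Eg (incr_ltE Nf_incr) (incr_ltE Hz).
    rewrite (incr_ltE Hkk); exact: leq_trans Hz' (leq_addr _ _).
have Hagree : agree p g (catf (map Nf xs) g').
  move=> i Hi; rewrite /catf Hsz Hi (nth_map 0) ?size_map ?size_iota //.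
  by rewrite (nth_map 0) ?size_iota // nth_iota // add0n Eg.
exact/(Hp _ (sub_id Hinc) Hagree).
Qed.

Theorem GP_id : exists N, incr N /\
  ((forall g, sub g N -> c g) \/ (forall g, sub g N -> ~ c g)).
Proof.
case: Nf_dec0 => [Hacc|Hrej].
  exists Nf; split; first exact: Nf_incr.
  left => g Hg; have H := Hacc g Hg.
  have E : feq g (catf [::] g) by move=> i; rewrite catf_nil.
  exact/(cloP_feq Hc (sub_id (sub_incr Hg)) E).
exists (fun i => Nf (zs i)); split.
  have H0 : R [::].
    move=> N HN; apply: Hrej; apply: sub_feqr HN _.
    by move=> i; rewrite /shn add0n.
  by move=> i; rewrite (incr_ltE Nf_incr); exact: zs_incr.
right; apply: D4.
move=> N HN; apply: Hrej; apply: sub_feqr HN _.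
by move=> i; rewrite /shn add0n.
Qed.
End GPid.

Theorem GP (c : (nat -> nat) -> Prop) V : incr V -> cloP c V ->
  exists V', sub V' V /\ ((forall T, sub T V' -> c T) \/ (forall T, sub T V' -> ~ c T)).
Proof.
move=> HV Hc.
pose c' g := c (fun i => V (g i)).
have Hc' : cloP c' id.
  move=> T HT; have HT' := sub_comp (sub_incr HT) HV.
  case: (Hc _ HT') => p Hp; exists p => T' HT1 Ag.
  apply: Hp; first exact: sub_comp (sub_incr HT1) HV.
  by move=> i Hi; rewrite Ag.
case: (GP_id Hc') => N [HN H].
have HVN : incr (fun i => V (N i)) by move=> i; rewrite (incr_ltE HV).
exists (fun i => V (N i)); split; first exact: sub_comp HN HV.
have conv : forall T, sub T (fun i => V (N i)) -> exists g, sub g N /\ (c' g <-> c T).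
  move=> T HT; case: (sub_index HT HVN) => kk [Hkk E].
  exists (fun i => N (kk i)); split; first exact: sub_comp Hkk HN.
  apply: iff_sym; apply: (cloP_feq Hc (sub_comp _ HV)).
    by move=> i; rewrite (incr_ltE HN); exact: Hkk.
  by move=> i; rewrite E.
case: H => H; [left|right] => T HT; case: (conv T HT) => g [Hg Eg].
  by apply/Eg/H.
by move=> HcT; apply: (H g Hg); apply/Eg.
Qed.

Lemma catf_feq s f g : feq f g -> feq (catf s f) (catf s g).
Proof. by move=> E i; rewrite /catf E. Qed.

Lemma catf_agree s f g r : agree r f g -> agree (size s + r) (catf s f) (catf s g).
Proof.
move=> H i Hi; rewrite /catf; case: ifP => // Hs.
by apply: H; rewrite ltn_subLR // leqNgt Hs.
Qed.

Lemma catf_pre_agree Z q T : agree q Z (catf (map Z (iota 0 q)) T).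
Proof.
move=> i Hi; rewrite /catf size_map size_iota Hi (nth_map 0) ?size_iota //.
by rewrite nth_iota.
Qed.

Lemma catf_pre_shn Z q : feq (catf (map Z (iota 0 q)) (shn q Z)) Z.
Proof.
move=> i; rewrite /catf size_map size_iota; case: ifP => H.
  by rewrite (nth_map 0) ?size_iota // nth_iota.
by rewrite /shn subnKC // leqNgt H.
Qed.

Lemma sub_catf (u : seq nat) T W : incr (catf u T) -> (forall x, x \in u -> exists j, x = W j) ->
  sub T W -> sub (catf u T) W.
Proof.
move=> Hi Hu [_ HT]; split => // i; rewrite /catf; case: ifP => H.
  by apply: Hu; exact: mem_nth.
exact: HT.
Qed.

Lemma sorted_map_incr Z l : incr Z -> sorted ltn l -> sorted ltn (map Z l).
Proof. by move=> HZ Hl; apply: homo_sorted Hl => x y H; exact: incr_lt HZ _ _ H. Qed.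

Lemma mem_pre (Z : nat -> nat) q (x : nat) : x \in map Z (iota 0 q) -> exists2 i, i < q & x = Z i.
Proof. by case/mapP => i; rewrite mem_iota add0n => /andP[_ Hi] ->; exists i. Qed.

Lemma catf_pre_sub Z q T : incr Z -> sub T (shn q Z) ->
  sub (catf (map Z (iota 0 q)) T) Z.
Proof.
move=> HZ HT; apply: sub_catf.
- apply: incr_catf; first exact/sorted_map_incr/iota_ltn_sorted.
    exact: sub_incr HT.
  move=> x /mem_pre [i Hi ->]; case: HT => _ /(_ 0) [j ->].
  rewrite /shn (incr_ltE HZ); exact: leq_trans Hi (leq_addr _ _).
- by move=> x /mem_pre [i _ ->]; exists i.
- exact: sub_trans HT (sub_shn q HZ).
Qed.

Lemma catf_one_sh w Z : feq (sh (catf [:: w] Z)) Z.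
Proof. by move=> i; rewrite /sh /catf /= subn1. Qed.


Lemma catf_rcons1 ws w Z : feq (catf (rcons ws w) Z) (catf ws (catf [:: w] Z)).
Proof.
move=> i; have E := @catf_rcons ws w (catf [:: w] Z) erefl.
rewrite E; apply: catf_feq => j; by rewrite catf_one_sh.
Qed.

Definition cont (P : (nat -> nat) -> (nat -> nat)) (W V : nat -> nat) :=
  (forall T, sub T W -> sub (P T) V) /\
  (forall T p, sub T W -> exists r, forall T', sub T' W -> agree r T T' -> agree p (P T) (P T')).

Lemma clo_cont X (h : (nat -> nat) -> X) P W V : clo h V -> cont P W V ->
  clo (fun T => h (P T)) W.
Proof.
move=> Hh [H1 H2] T HT; case: (Hh _ (H1 T HT)) => p Hp.
case: (H2 T p HT) => r Hr; exists r => T' HT' Ag.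
exact: Hp (H1 _ HT') (Hr _ HT' Ag).
Qed.

Lemma ex_min (P : nat -> Prop) : (exists n, P n) -> exists n, P n /\ forall k, P k -> n <= k.
Proof.
move=> [n Hn]; apply: NNPP => H.
suff : forall n k, k < n -> ~ P k by move/(_ n.+1 n (ltnSn n)).
elim=> // j IH k Hk Pk; apply: H; exists k; split => // l Pl.
rewrite leqNgt; apply/negP => Hl; apply: (IH l) => //.
exact: leq_trans Hl (Hk : k <= j).
Qed.

Section Order.
Variable T : Type.
Variable le : T -> T -> Prop.
Hypothesis Hrefl : forall x, le x x.
Hypothesis Htrans : forall x y z, le x y -> le y z -> le x z.
Hypothesis Hanti : forall x y, le x y -> le y x -> x = y.
Definition lt x y := le x y /\ x <> y.
Hypothesis H22 : forall x y z w, lt z x -> lt w y -> lt z y \/ lt w x.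
Hypothesis Hwf : ~ exists f : nat -> T, forall n, strict le (f n.+1) (f n).
Hypothesis Hac : ~ exists f : nat -> T, forall i j, i <> j -> ~ le (f i) (f j).

Lemma BSL (x : nat -> T) : ~ (forall i j, i < j -> ~ le (x i) (x j)).
Proof.
move=> Hx.
case: (classic (exists N, forall n, N <= n -> exists m, n < m /\ le (x m) (x n))) => [[N HN]|HN].
  have Hex : forall n, exists m, N <= n -> n < m /\ le (x m) (x n).
    move=> n; case: (leqP N n) => H; first by case: (HN n H) => m Hm; exists m.
    by exists 0.
  pose nx n := proj1_sig (constructive_indefinite_description _ (Hex n)).
  have Hnx n : N <= n -> n < nx n /\ le (x (nx n)) (x n).
    by rewrite /nx; case: constructive_indefinite_description.
  pose idx k := iter k nx N.
  have Hidx k : N <= idx k.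
    elim: k => // k IH; rewrite /idx iterS -/(idx k).
    exact: leq_trans IH (ltnW (Hnx _ IH).1).
  apply: Hwf; exists (fun k => x (idx k)) => k; rewrite /idx iterS -/(idx k).
  case: (Hnx _ (Hidx k)) => H1 H2; split => //; exact: Hx.
have HN' : forall N, exists n, N <= n /\ forall m, n < m -> ~ le (x m) (x n).
  move=> N; apply: NNPP => H; apply: HN; exists N => n Hn; apply: NNPP => H2.
  apply: H; exists n; split => // m Hm Hle; apply: H2; by exists m.
pose t N := proj1_sig (constructive_indefinite_description _ (HN' N)).
have Ht N : N <= t N /\ forall m, t N < m -> ~ le (x m) (x (t N)).
  by rewrite /t; case: constructive_indefinite_description.
have Hi : incr (itr t) by apply: itr_incr => J; case: (Ht J).
apply: Hac; exists (fun k => x (itr t k)) => i j Hij.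
case: (ltngtP i j) => H; last by rewrite H in Hij.
  by apply: Hx; rewrite (incr_ltE Hi).
case: (itr_range t j) => J EJ; rewrite EJ; apply: (Ht J).2.
by rewrite -EJ (incr_ltE Hi).
Qed.

Lemma Uch a b : (forall y, lt a y -> lt b y) \/ (forall y, lt b y -> lt a y).
Proof.
apply: NNPP => H.
have H1 : exists y, lt a y /\ ~ lt b y.
  apply: NNPP => H1; apply: H; left => y Hy; apply: NNPP => Hn; apply: H1; by exists y.
have H2 : exists y, lt b y /\ ~ lt a y.
  apply: NNPP => H2; apply: H; right => y Hy; apply: NNPP => Hn; apply: H2; by exists y.
case: H1 => y1 [Hay1 Hby1]; case: H2 => y2 [Hby2 Hay2].
by case: (H22 Hay1 Hby2).
Qed.

Lemma lt_le_trans a b c : lt a b -> le b c -> lt a c.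
Proof.
move=> [Hab Hne] Hbc; split; first exact: Htrans Hab Hbc.
move=> E; subst c; apply: Hne; exact: Hanti.
Qed.

Lemma SIL X (F : (nat -> nat) -> X) W : incr W -> clo F W ->
  (forall T, sub T W -> F (sh T) = F T) ->
  forall T1 T2, sub T1 W -> sub T2 W -> F T1 = F T2.
Proof.
move=> HW HF Hsh T1 T2 H1 H2.
have Hshn : forall k T, sub T W -> F (shn k T) = F T.
  elim=> [|k IH] T0 HT0.
    by apply: (clo_feq HF HT0) => i; rewrite /shn add0n.
  have Hs : sub (shn k T0) W := sub_trans (sub_shn k (sub_incr HT0)) HT0.
  rewrite -(IH _ HT0) -(Hsh _ Hs); apply: (clo_feq HF (sub_trans (sub_sh (sub_incr Hs)) Hs)).
  by move=> i; rewrite /sh /shn addnS addSn.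
case: (HF T1 H1) => p Hp.
have I1 := sub_incr H1; have I2 := sub_incr H2.
pose T3 := catf (map T1 (iota 0 p)) (shn (T1 p) T2).
have H3 : sub T3 W.
  apply: sub_catf.
  - apply: incr_catf; first exact/sorted_map_incr/iota_ltn_sorted.
      exact: incr_shn.
    move=> x /mem_pre [i Hi ->]; rewrite /shn addn0.
    exact: leq_trans (incr_lt I1 Hi) (incr_id I2 _).
  - by move=> x /mem_pre [i _ ->]; case: H1 => _ /(_ i).
  - exact: sub_trans (sub_shn _ I2) H2.
rewrite -(Hp _ H3 (@catf_pre_agree T1 p (shn (T1 p) T2))) -(Hshn p _ H3) -(Hshn (T1 p) _ H2).
apply: (clo_feq HF (sub_trans (sub_shn _ I2) H2)) => i.
rewrite /shn /T3 /catf size_map size_iota ltnNge leq_addr /=.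
by rewrite addKn.
Qed.

Fixpoint Lseq (F : (nat -> nat) -> T) (g : seq T -> nat -> nat) (n : nat) : seq T :=
  if n is n'.+1 then F (g (Lseq F g n')) :: Lseq F g n' else [::].

Lemma FAL (F : (nat -> nat) -> T) W : incr W -> clo F W ->
  (forall Z, sub Z W -> F Z <> F (sh Z)) ->
  (forall Z Z', sub Z W -> sub Z' W -> F Z = F Z' \/ ~ le (F Z) (F Z')) -> False.
Proof.
move=> HW HF Hne Hanc.
have [L HL] : exists L : seq T, forall Z, sub Z W -> List.In (F Z) L.
  apply: NNPP => Hn.
  have Hex : forall L : seq T, exists Z, sub Z W /\ ~ List.In (F Z) L.
    move=> L; apply: NNPP => H; apply: Hn; exists L => Z HZ; apply: NNPP => H2.
    by apply: H; exists Z.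
  pose g L := proj1_sig (constructive_indefinite_description _ (Hex L)).
  have Hg L : sub (g L) W /\ ~ List.In (F (g L)) L.
    by rewrite /g; case: constructive_indefinite_description.
  pose fa n := F (g (Lseq F g n)).
  have Hin : forall n j, j < n -> List.In (fa j) (Lseq F g n).
    elim=> // n IH j; rewrite ltnS leq_eqVlt => /orP[/eqP->|Hj]; first by left.
    by right; apply: IH.
  have Hdist : forall i j, i < j -> fa i <> fa j.
    move=> i j Hij E; have HH := (Hg (Lseq F g j)).2; apply: HH.
    have -> : F (g (Lseq F g j)) = fa i by rewrite E.
    exact: Hin.
  apply: Hac; exists fa => i j Hij.
  have Hne' : fa i <> fa j.
    case: (ltngtP i j) => H; [exact: Hdist| |by rewrite H in Hij].
    by move=> E; apply: (Hdist _ _ H); rewrite E.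
  by case: (Hanc _ _ (Hg (Lseq F g i)).1 (Hg (Lseq F g j)).1) => // E; case: Hne'.
clear Hanc.
elim: L W HW HF Hne HL => [|x L IH] W HW HF Hne HL.
  by case: (HL W (sub_refl HW)).
case: (GP HW (cloP1 (fun y => y = x) HF)) => W' [HW' [Hall|Hnone]].
  apply: (Hne W' HW'); rewrite (Hall _ (sub_refl (sub_incr HW'))).
  by rewrite (Hall _ (sub_sh (sub_incr HW'))).
apply: (IH W' (sub_incr HW') (clo_sub HF HW')).
  by move=> Z HZ; apply: Hne; apply: sub_trans HZ HW'.
move=> Z HZ; case: (HL Z (sub_trans HZ HW')) => // E.
by case: (Hnone Z HZ); rewrite E.
Qed.

End Order.

Lemma catf_shn_agree (Z W' : nat -> nat) q : agree q Z W' ->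
  feq (catf (map Z (iota 0 q)) (shn q W')) W'.
Proof.
move=> Ag i; rewrite /catf size_map size_iota; case: ifP => H.
  by rewrite (nth_map 0) ?size_iota // nth_iota // add0n Ag.
by rewrite /shn subnKC // leqNgt H.
Qed.

Section Main.
Variable T : Type.
Variable le : T -> T -> Prop.
Hypothesis Hrefl : forall x, le x x.
Hypothesis Htrans : forall x y z, le x y -> le y z -> le x z.
Hypothesis Hanti : forall x y, le x y -> le y x -> x = y.
Hypothesis H22 : forall x y z w, lt le z x -> lt le w y -> lt le z y \/ lt le w x.
Hypothesis Hwf : ~ exists f : nat -> T, forall n, strict le (f n.+1) (f n).
Hypothesis Hac : ~ exists f : nat -> T, forall i j, i <> j -> ~ le (f i) (f j).
Variable h : (nat -> nat) -> T.
Variable V : nat -> nat.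
Hypothesis HV : incr V.
Hypothesis Hh : clo h V.
Hypothesis Hbad : forall Z, sub Z V -> ~ le (h Z) (h (sh Z)).

Definition Det0 W n := forall W', sub W' V -> agree n W W' -> h W' = h W.

Lemma m_ex W : exists n, sub W V -> Det0 W n /\ forall k, Det0 W k -> n <= k.
Proof.
case: (classic (sub W V)) => HW; last by exists 0.
case: (ex_min (P := Det0 W) _) => [|n [H1 H2]]; last by exists n.
case: (Hh HW) => p Hp; by exists p.
Qed.

Definition m W := proj1_sig (constructive_indefinite_description _ (m_ex W)).

Lemma mP W : sub W V -> Det0 W (m W) /\ forall k, Det0 W k -> m W <= k.
Proof. by rewrite /m; case: constructive_indefinite_description. Qed.

Lemma m_agree W W' : sub W V -> sub W' V -> agree (m W) W W' -> m W' = m W.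
Proof.
move=> HW HW' Ag; case: (mP HW) => D1 M1; case: (mP HW') => D2 M2.
have E : h W' = h W by apply: D1.
have Hle : m W' <= m W.
  apply: M2 => W'' H'' Ag'; rewrite E; apply: D1 => //.
  exact: agree_trans Ag Ag'.
apply/eqP; rewrite eqn_leq Hle /=; apply: M1 => W'' H'' Ag'.
rewrite -E; apply: D2 => //.
exact: agree_trans (agree_sym (agree_le Ag Hle)) Ag'.
Qed.

Lemma m_feq W W' : sub W V -> feq W W' -> m W' = m W.
Proof. by move=> HW E; apply: m_agree HW (sub_feq HW E) _ => i _; exact: E i. Qed.

Definition Inv (ws : seq nat) (Y : nat -> nat) :=
  [/\ sub Y V, (forall Z, sub Z Y -> sub (catf ws Z) V) &
      (forall Z Z', sub Z Y -> sub Z' Y ->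
         agree (m (catf ws Z) - size ws) Z Z' -> h Z = h Z')].

Section Step.
Variable ws : seq nat.
Variable Y : nat -> nat.
Hypothesis HI : Inv ws Y.

Lemma HY : sub Y V. Proof. by case: HI. Qed.
Lemma HcY Z : sub Z Y -> sub (catf ws Z) V. Proof. by case: HI => _ H _; apply: H. Qed.
Lemma Det Z Z' : sub Z Y -> sub Z' Y -> agree (m (catf ws Z) - size ws) Z Z' -> h Z = h Z'.
Proof. by case: HI => _ _ H; apply: H. Qed.

Definition kf Z := m (catf ws Z) - size ws.

Lemma kf_agree Z Z' : sub Z Y -> sub Z' Y -> agree (kf Z) Z Z' -> kf Z' = kf Z.
Proof.
move=> HZ HZ' Ag; rewrite /kf (m_agree (HcY HZ) (HcY HZ')) //.
apply: agree_le (catf_agree (s:=ws) Ag) _.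
by rewrite /kf -leq_subLR leqnn.
Qed.

Definition dl (Z : nat -> nat) := fun i => if i < kf Z then Z i else Z i.+1.

Lemma dl_sub Z : sub Z Y -> sub (dl Z) Z.
Proof.
move=> HZ; have HZi := sub_incr HZ; split.
  move=> i; rewrite /dl; case: (ltnP i.+1 (kf Z)) => H1.
    by rewrite (ltn_trans (ltnSn i) H1); apply: HZi.
  case: (ltnP i (kf Z)) => H2; last exact: HZi.
  by apply: incr_lt HZi _ _ _.
by move=> i; exists (if i < kf Z then i else i.+1); rewrite /dl; case: ifP.
Qed.

Lemma dl_agree Z : agree (kf Z) Z (dl Z).
Proof. by move=> i Hi; rewrite /dl Hi. Qed.

Lemma dl_catf (u : seq nat) Z : kf (catf u Z) = size u ->
  feq (dl (catf u Z)) (catf u (sh Z)).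
Proof.
move=> Hk i; rewrite /dl Hk /catf; case: (ltnP i (size u)) => H //.
have -> : (i.+1 < size u) = false by apply/negbTE; rewrite -leqNgt; exact: leqW.
by rewrite /sh subSn.
Qed.

Definition c1 Z := forall y, lt le (h (sh Z)) y -> lt le (h Z) y.

Lemma step1 : exists Y1, sub Y1 Y /\ forall Z, sub Z Y1 -> c1 Z.
Proof.
have HYi := sub_incr HY.
have HhY := clo_sub Hh HY.
have Hc : cloP c1 Y :=
  cloP2 (fun a b => forall y, lt le a y -> lt le b y) (clo_sh HhY) HhY.
case: (GP HYi Hc) => Y1 [HY1 [H|H]]; first by exists Y1.
exfalso.
have HY1i := sub_incr HY1.
pose x j := h (shn j Y1).
have Hsj j : sub (shn j Y1) Y1 := sub_shn j HY1i.
have HsV j : sub (shn j Y1) V := sub_trans (Hsj j) (sub_trans HY1 HY).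
have Ex j : h (sh (shn j Y1)) = x j.+1.
  apply: (clo_feq Hh (HsV j.+1)).
  by move=> i; rewrite /sh /shn addSn addnS.
have Hmono j : forall y, lt le (x j) y -> lt le (x j.+1) y.
  case: (Uch H22 (x j) (x j.+1)) => // Hr.
  by exfalso; apply: (H _ (Hsj j)); rewrite /c1 Ex.
have Hy j : exists y, lt le (x j.+1) y /\ ~ lt le (x j) y.
  apply: NNPP => Hn; apply: (H _ (Hsj j)) => y; rewrite Ex => Hy.
  by apply: NNPP => Hn2; apply: Hn; exists y.
pose ys j := proj1_sig (constructive_indefinite_description _ (Hy j)).
have Hys j : lt le (x j.+1) (ys j) /\ ~ lt le (x j) (ys j).
  by rewrite /ys; case: constructive_indefinite_description.
have Hmono2 : forall i j, i <= j -> forall y, lt le (x i) y -> lt le (x j) y.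
  move=> i j; elim: j => [|j IH]; first by rewrite leqn0 => /eqP->.
  rewrite leq_eqVlt => /orP[/eqP->//|Hij] y Hxy; apply: Hmono; exact: IH.
apply: (BSL Hwf Hac (x := ys)) => i j Hij Hle.
case: (Hys i) => H1 _; case: (Hys j) => _ H2; apply: H2.
exact: Hmono2 Hij _ (lt_le_trans Htrans Hanti H1 Hle).
Qed.

Definition c2 Z := h (sh Z) = h (sh (dl Z)).

Lemma clo_dl : clo (fun Z => h (sh (dl Z))) Y.
Proof.
apply: (clo_cont (P := fun Z => sh (dl Z)) Hh); split.
  move=> Z HZ; have HZV := sub_trans HZ HY.
  have H1 := sub_trans (dl_sub HZ) HZV.
  exact: sub_trans (sub_sh (sub_incr H1)) H1.
move=> Z p HZ; exists (kf Z + p + 2) => Z' HZ' Ag.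
have Ek : kf Z' = kf Z by apply: kf_agree => //; apply: agree_le Ag _; lia.
move=> i Hi; rewrite /sh /dl Ek; case: ifP => _; apply: Ag; lia.
Qed.

Section Cases.
Variables Y1 Y2 : nat -> nat.
Hypothesis HY1 : sub Y1 Y.
Hypothesis HY2 : sub Y2 Y1.
Hypothesis Hc1 : forall Z, sub Z Y1 -> c1 Z.

Lemma HY2Y : sub Y2 Y. Proof. exact: sub_trans HY2 HY1. Qed.
Lemma HY2i : incr Y2. Proof. exact: sub_incr HY2. Qed.

Lemma caseA : (forall Z, sub Z Y2 -> ~ c2 Z) -> False.
Proof.
move=> Hn.
pose q := kf Y2.
pose u := map Y2 (iota 0 q).
pose V' := shn q Y2.
have Hsu : size u = q by rewrite size_map size_iota.
have HWT T0 : sub T0 V' -> sub (catf u T0) Y2 := catf_pre_sub HY2i.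
have HWY T0 : sub T0 V' -> sub (catf u T0) Y := fun H => sub_trans (HWT T0 H) HY2Y.
have HWV T0 : sub T0 V' -> sub (catf u T0) V := fun H => sub_trans (HWY T0 H) HY.
have HkT T0 : sub T0 V' -> kf (catf u T0) = q.
  by move=> H; apply: kf_agree HY2Y (HWY _ H) (@catf_pre_agree Y2 q T0).
have HhT T0 : sub T0 V' -> h (catf u T0) = h Y2.
  by move=> H; symmetry; apply: Det HY2Y (HWY _ H) (@catf_pre_agree Y2 q T0).
pose F T0 := h (sh (catf u T0)).
have HshV T0 : sub T0 V' -> sub (sh (catf u T0)) V.
  by move=> H; exact: sub_trans (sub_sh (sub_incr (HWV _ H))) (HWV _ H).
have HF : clo F V'.
  apply: (clo_cont (P := fun T0 => sh (catf u T0)) Hh); split => //.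
  move=> T0 p HT0; exists p.+1 => T' HT' Ag i Hi.
  by rewrite /sh (catf_agree (s:=u) Ag) // Hsu; lia.
apply: (FAL Hac (W := V') (F := F)).
- exact: incr_shn HY2i.
- exact: HF.
- move=> Z HZ E; apply: (Hn _ (HWT _ HZ)); rewrite /c2.
  have E2 : h (sh (dl (catf u Z))) = h (sh (catf u (sh Z))).
    apply: (clo_feq Hh (HshV _ (sub_trans (sub_sh (sub_incr HZ)) HZ))).
    by move=> i; rewrite /sh dl_catf ?Hsu ?HkT.
  by rewrite E2.
- move=> Z Z' HZ HZ'; case: (classic (F Z = F Z')) => Heq; [by left| right => Hle].
  have Hlt : lt le (F Z) (F Z') by split.
  have := Hc1 (sub_trans (HWT _ HZ) HY2) Hlt.
  rewrite HhT // -(HhT _ HZ') => [[Hle2 _]].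
  exact: Hbad (HWV _ HZ') Hle2.
Qed.

Lemma keyB : (forall Z, sub Z Y2 -> c2 Z) ->
  forall W1 W2, sub W1 Y2 -> sub W2 Y2 -> agree (kf W1) W1 W2 -> h (sh W1) = h (sh W2).
Proof.
move=> Hall W1 W2 HW1 HW2 Ag.
pose q := kf W1.
pose u := map W1 (iota 0 q).
have Hsu : size u = q by rewrite size_map size_iota.
have HW1i := sub_incr HW1.
have [r [Hr1 Hr2]] : exists r, (forall i, i < q -> W1 i < Y2 r) /\
    (forall j, (0 < q -> W1 q.-1 < Y2 j) -> r <= j).
  case Eq: q => [|q'].
    by exists 0; split => // i; rewrite ltn0.
  case: HW1 => _ /(_ q') [r0 E0]; exists r0.+1; split.
    move=> i Hi; apply: leq_ltn_trans (_ : W1 i <= W1 q') _.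
      by apply: incr_le HW1i _ _ _; rewrite -ltnS.
    by rewrite E0; exact: HY2i.
  by move=> j /(_ erefl) /=; rewrite E0 (incr_ltE HY2i).
pose V'' := shn r Y2.
have HsubV T0 : sub T0 V'' -> sub (catf u T0) Y2.
  move=> HT0; apply: sub_catf.
  - apply: incr_catf; first exact/sorted_map_incr/iota_ltn_sorted.
      exact: sub_incr HT0.
    move=> x /mem_pre [i Hi ->]; apply: leq_trans (Hr1 _ Hi) _.
    case: HT0 => _ /(_ 0) [j ->]; rewrite /shn; apply: incr_le HY2i _ _ _.
    exact: leq_addr.
  - by move=> x /mem_pre [i _ ->]; case: HW1 => _ /(_ i).
  - exact: sub_trans HT0 (sub_shn r HY2i).
have Htail W' : sub W' Y2 -> agree q W1 W' -> sub (shn q W') V''.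
  move=> HW' AgW; split; first exact: incr_shn (sub_incr HW').
  move=> i; case: HW' => HW'i /(_ (q + i)) [j Ej].
  exists (j - r); rewrite /V'' /shn Ej subnKC //; apply: Hr2 => Hq.
  rewrite AgW; last by rewrite prednK.
  rewrite -Ej; apply: incr_lt HW'i _ _ _; lia.
have HkT T0 : sub T0 V'' -> kf (catf u T0) = q.
  move=> H; apply: kf_agree (sub_trans HW1 HY2Y) (sub_trans (HsubV _ H) HY2Y) _.
  exact: catf_pre_agree.
have HsV T0 : sub T0 V'' -> sub (sh (catf u T0)) V.
  move=> H; have H1 := sub_trans (HsubV _ H) (sub_trans HY2Y HY).
  exact: sub_trans (sub_sh (sub_incr H1)) H1.
pose F T0 := h (sh (catf u T0)).
have HF : clo F V''.
  apply: (clo_cont (P := fun T0 => sh (catf u T0)) Hh); split => //.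
  move=> T0 p HT0; exists p.+1 => T' HT' Ag' i Hi.
  by rewrite /sh (catf_agree (s:=u) Ag') // Hsu; lia.
have HSIL : forall T0, sub T0 V'' -> F (sh T0) = F T0.
  move=> T0 HT0; rewrite /F (Hall _ (HsubV _ HT0)); apply: esym; apply: (clo_feq Hh).
    exact: HsV (sub_trans (sub_sh (sub_incr HT0)) HT0).
  by move=> i; rewrite /sh dl_catf ?Hsu ?HkT.
have H1 := Htail W1 HW1 (fun i _ => erefl).
have H2 := Htail W2 HW2 Ag.
have := SIL (incr_shn r HY2i) HF HSIL H1 H2; rewrite /F.
have E1 : h (sh (catf u (shn q W1))) = h (sh W1).
  apply: (clo_feq Hh (sub_trans (sub_sh HW1i) (sub_trans HW1 (sub_trans HY2Y HY)))).
  by move=> i; rewrite /sh (catf_shn_agree (fun i _ => erefl)).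
have E2 : h (sh (catf u (shn q W2))) = h (sh W2).
  have HW2i := sub_incr HW2.
  apply: (clo_feq Hh (sub_trans (sub_sh HW2i) (sub_trans HW2 (sub_trans HY2Y HY)))).
  by move=> i; rewrite /sh (catf_shn_agree Ag).
by rewrite E1 E2.
Qed.

Lemma caseB : (forall Z, sub Z Y2 -> c2 Z) -> Inv (rcons ws (Y2 0)) (sh Y2).
Proof.
move=> Hall; set w := Y2 0.
have HshY2 : sub (sh Y2) Y2 := sub_sh HY2i.
have HWZ Z : sub Z (sh Y2) -> sub (catf [:: w] Z) Y2.
  move=> HZ; apply: (catf_pre_sub (q := 1) HY2i).
  by apply: sub_feqr HZ _ => i; rewrite /shn add1n.
have HWZV Z : sub Z (sh Y2) -> sub (catf ws (catf [:: w] Z)) V.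
  by move=> HZ; apply: HcY; exact: sub_trans (HWZ _ HZ) HY2Y.
split.
- exact: sub_trans HshY2 (sub_trans HY2Y HY).
- move=> Z HZ; apply: sub_feq (HWZV _ HZ) _ => i.
  by rewrite catf_rcons1.
- move=> Z Z' HZ HZ' Ag.
  have Em : m (catf (rcons ws w) Z) = m (catf ws (catf [:: w] Z)).
    by apply: m_feq (HWZV _ HZ) _ => i; rewrite catf_rcons1.
  rewrite Em size_rcons subnS -/(kf _) in Ag.
  have Ag2 : agree (kf (catf [:: w] Z)) (catf [:: w] Z) (catf [:: w] Z').
    move=> [|i] Hi //; rewrite /catf /= !subn1 /=; apply: Ag; lia.
  have := keyB Hall (HWZ _ HZ) (HWZ _ HZ') Ag2.
  have HZi := sub_incr HZ; have HZ'i := sub_incr HZ'.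
  rewrite (clo_feq Hh (sub_trans HZ (sub_trans HshY2 (sub_trans HY2Y HY))) (fun i => esym (catf_one_sh w Z i))).
  by rewrite (clo_feq Hh (sub_trans HZ' (sub_trans HshY2 (sub_trans HY2Y HY))) (fun i => esym (catf_one_sh w Z' i))).
Qed.

End Cases.

Lemma step : exists w Y', Inv (rcons ws w) Y'.
Proof.
case: step1 => Y1 [HY1 Hc1].
have HY1i := sub_incr HY1.
have Hc : cloP c2 Y1 := cloP2 (fun a b => a = b) (clo_sh (clo_sub Hh (sub_trans HY1 HY)))
    (clo_sub clo_dl HY1).
case: (GP HY1i Hc) => Y2 [HY2 [H|H]].
  exists (Y2 0), (sh Y2); exact: caseB HY1 HY2 H.
by exfalso; apply: (caseA HY1 HY2 Hc1 H).
Qed.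

End Step.

Lemma Inv0 : Inv [::] V.
Proof.
split; first exact: sub_refl HV.
  by move=> Z HZ; apply: sub_feq HZ _ => i; rewrite catf_nil.
move=> Z Z' HZ HZ' Ag.
have HZV : sub Z V := HZ.
have E : feq Z (catf [::] Z) by move=> i; rewrite catf_nil.
rewrite (m_feq HZV E) subn0 in Ag.
by symmetry; apply: (mP HZV).1.
Qed.

Lemma stepP (st : seq nat * (nat -> nat)) :
  exists p : nat * (nat -> nat), Inv st.1 st.2 -> Inv (rcons st.1 p.1) p.2.
Proof.
case: (classic (Inv st.1 st.2)) => H; last by exists (0, V).
by case: (step H) => w [Y' HY']; exists (w, Y').
Qed.

Definition nxs (st : seq nat * (nat -> nat)) :=
  let p := proj1_sig (constructive_indefinite_description _ (stepP st)) in
  (rcons st.1 p.1, p.2).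

Lemma nxsP st : Inv st.1 st.2 -> Inv (nxs st).1 (nxs st).2.
Proof. by rewrite /nxs; case: constructive_indefinite_description => p Hp /= /Hp. Qed.

Definition sts k := iter k nxs ([::], V).

Lemma sts_inv k : Inv (sts k).1 (sts k).2.
Proof. elim: k => [|k IH]; [exact: Inv0| exact: nxsP]. Qed.

Lemma sts_size k : size (sts k).1 = k.
Proof. by elim: k => // k IH; rewrite /sts iterS -/(sts k) /nxs /= size_rcons IH. Qed.

Definition Wf i := nth 0 (sts i.+1).1 i.

Lemma sts_map k : (sts k).1 = map Wf (iota 0 k).
Proof.
elim: k => // k IH.
rewrite -addn1 iotaD map_cat add0n cats1 -IH addn1.
have [x Ex] : exists x, (sts k.+1).1 = rcons (sts k).1 x by eexists.
by rewrite Ex /Wf Ex nth_rcons sts_size ltnn eqxx.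
Qed.

Lemma Wf_sub : sub Wf V.
Proof.
have Hval : forall k i, i < k -> catf (sts k).1 (sts k).2 i = Wf i.
  by move=> k i Hi; rewrite sts_map -(@catf_pre_agree Wf k (sts k).2 i Hi).
have Hs k : sub (catf (sts k).1 (sts k).2) V.
  by case: (sts_inv k) => H1 H2 _; apply: H2; exact: sub_refl (sub_incr H1).
split.
  move=> i; rewrite -(Hval i.+2 i) // -(Hval i.+2 i.+1) //.
  exact: (sub_incr (Hs i.+2)).
move=> i; rewrite -(Hval i.+1 i) //; case: (Hs i.+1) => _; apply.
Qed.

Theorem MT : False.
Proof.
pose n0 := m Wf.
case: (sts_inv n0) => H1 H2 H3.
set Y := (sts n0).2 in H1 H2 H3.
have HYi := sub_incr H1.
have HYY : sub Y Y := sub_refl HYi.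
have Em : m (catf (sts n0).1 Y) = n0.
  apply: m_agree Wf_sub (H2 _ HYY) _.
  by rewrite sts_map; exact: catf_pre_agree.
have E := H3 Y (sh Y) HYY (sub_sh HYi).
rewrite Em sts_size subnn in E.
apply: (Hbad H1); rewrite -E //; exact: Hrefl.
Qed.

End Main.

Lemma interval_22 (T : Type) (le : T -> T -> Prop) : interval_order le ->
  forall x y z w, lt le z x -> lt le w y -> lt le z y \/ lt le w x.
Proof.
move=> [[[Hrefl Htrans] Hanti] [C [leC [I [[[[Crefl Ctrans] Canti] Ctot] [_ [_ Hchar]]]]]]].
have Hlt : forall a b, lt le a b -> forall p q, I a p -> I b q -> leC p q /\ p <> q.
  move=> a b [Hab Hne]; case: ((Hchar a b).1 Hab) => // H.
have Hnlt : forall a b, ~ lt le a b -> a = b \/ exists p q, I a p /\ I b q /\ leC q p.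
  move=> a b H; case: (classic (a = b)) => Hab; first by left.
  right; apply: NNPP => H2; apply: H; split => //; apply/(Hchar a b); right => p q Hp Hq.
  have Hn : ~ leC q p by move=> Hc; apply: H2; exists p, q.
  case: (Ctot p q) => Hpq; last by [].
  by split => // E; subst q; apply: Hn; exact: Crefl.
move=> x y z w Hzx Hwy; apply: NNPP => H.
have H1 : ~ lt le z y by move=> Hc; apply: H; left.
have H2 : ~ lt le w x by move=> Hc; apply: H; right.
have ltrans : forall a b c, lt le a b -> lt le b c -> lt le a c.
  move=> a b c [Hab Hne] [Hbc Hne2]; split; first exact: Htrans Hab Hbc.
  move=> E; subst c; apply: Hne; exact: Hanti Hab Hbc.
case: (Hnlt _ _ H1) => [E|[p [q [Hp [Hq Hqp]]]]].
  by subst y; apply: H2; exact: ltrans Hwy Hzx.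
case: (Hnlt _ _ H2) => [E|[p' [q' [Hp' [Hq' Hqp']]]]].
  by subst x; apply: H1; exact: ltrans Hzx Hwy.
case: (Hlt _ _ Hzx p q' Hp Hq') => Hpq' Hne.
case: (Hlt _ _ Hwy p' q Hp' Hq) => Hp'q _.
apply: Hne; apply: (Canti p q' Hpq').
exact: Ctrans _ _ _ (Ctrans _ _ _ Hqp' Hp'q) Hqp.
Qed.

Lemma sorted_le_last (s : seq nat) y : sorted ltn s -> y \in s -> y <= last 0 s.
Proof.
case/lastP: s => // s x; rewrite last_rcons mem_rcons inE => Hs /orP[/eqP->//|Hy].
exact: ltnW (sorted_rcons_lt Hs Hy).
Qed.

Definition rng (Z : nat -> nat) := fun n => exists i, Z i = n.

Lemma IS Z s : incr Z -> nonempty_initial_segment s (rng Z) ->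
  s = map Z (iota 0 (size s)) /\ 0 < size s.
Proof.
move=> HZ [Hs [Hne [Hin Hcl]]].
have Hx : last 0 s \in s by case: s Hne {Hs Hin Hcl} => // y s _; exact: mem_last.
case: (Hin _ Hx) => q Eq.
have E : s = map Z (iota 0 q.+1).
  apply: (irr_sorted_eq ltn_trans ltnn) => //.
    exact/sorted_map_incr/iota_ltn_sorted.
  move=> y; apply/idP/idP => Hy.
    case: (Hin _ Hy) => i Ei; rewrite -Ei; apply: map_f.
    rewrite mem_iota leq0n /= add0n ltnS -(incr_leE HZ i q) Eq Ei.
    exact: sorted_le_last.
  case/mem_pre: Hy => i Hi ->; apply: Hcl; first by exists i.
  by rewrite -Eq; apply: incr_le HZ _ _ _; rewrite -ltnS.
by rewrite E size_map size_iota; split.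
Qed.

Lemma mem_pre2 (Z : nat -> nat) q i : i < q -> Z i \in map Z (iota 0 q).
Proof. by move=> H; apply: map_f; rewrite mem_iota add0n. Qed.

Lemma map_agree Z Z' p : agree p Z Z' -> map Z (iota 0 p) = map Z' (iota 0 p).
Proof. by move=> Ag; apply/eq_in_map => x; rewrite mem_iota add0n => /andP[_ /Ag]. Qed.

Lemma sumn_ge (s : seq nat) x : x \in s -> x <= sumn s.
Proof.
elim: s => // y s IH; rewrite inE => /orP[/eqP->|/IH H] /=; first exact: leq_addr.
exact: leq_trans H (leq_addl _ _).
Qed.

Section Glue.
Variable T : Type.
Variable le : T -> T -> Prop.
Variable B : seq nat -> Prop.
Hypothesis HB : barrier B.
Variable f : seq nat -> T.
Hypothesis Hbadf : forall s t, B s -> B t -> shift_rel s t -> ~ le (f s) (f t).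

Definition A n := exists s, B s /\ n \in s.

Lemma A_inf : forall N, exists n, N <= n /\ A n.
Proof.
case: HB => Hfin [Hinf _].
apply: NNPP => H.
have [N HN] : exists N, forall n, A n -> n < N.
  apply: NNPP => H2; apply: H => N; apply: NNPP => H3; apply: H2; exists N => n Hn.
  by rewrite ltnNge; apply/negP => Hle; apply: H3; exists n.
apply: Hinf; exists (subseqs (iota 0 N)) => s Hs.
rewrite mem_subseqs; apply: subseq_iota; first exact: Hfin.
by move=> x Hx; apply: HN; exists s.
Qed.

Lemma nxtA_ex n : exists m, n < m /\ A m.
Proof. by case: (A_inf n.+1) => m [H1 H2]; exists m. Qed.

Definition nxtA n := proj1_sig (constructive_indefinite_description _ (nxtA_ex n)).
Lemma nxtAP n : n < nxtA n /\ A (nxtA n).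
Proof. by rewrite /nxtA; case: constructive_indefinite_description. Qed.

Definition VA i := iter i.+1 nxtA 0.

Lemma VA_incr : incr VA.
Proof. by move=> i; rewrite /VA iterS; exact: (nxtAP _).1. Qed.

Lemma VA_A i : A (VA i).
Proof. by rewrite /VA iterS; exact: (nxtAP _).2. Qed.

Lemma sZ_ex Z : exists s, sub Z VA -> B s /\ nonempty_initial_segment s (rng Z).
Proof.
case: (classic (sub Z VA)) => HZ; last by exists [::].
case: HB => _ [_ [_ Hbar]].
case: (Hbar (rng Z)) => [n|n [i <-]|s Hs]; last by exists s.
  by exists (Z n); split; [exact: incr_id (sub_incr HZ) _| exists n].
case: HZ => _ /(_ i) [j ->]; exact: VA_A.
Qed.

Definition sZ Z := proj1_sig (constructive_indefinite_description _ (sZ_ex Z)).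

Lemma sZP Z : sub Z VA -> B (sZ Z) /\
  sZ Z = map Z (iota 0 (size (sZ Z))) /\ 0 < size (sZ Z).
Proof.
move=> HZ; rewrite /sZ; case: constructive_indefinite_description => s Hs /=; case: (Hs HZ) => H1 H2.
by split => //; apply: IS (sub_incr HZ) H2.
Qed.

Lemma UQ Z a b : incr Z -> B (map Z (iota 0 a)) -> B (map Z (iota 0 b)) -> a <= b ->
  0 < b -> a = b.
Proof.
case: HB => _ [_ [Hanti _]] HZ Ha Hb Hab Hb0.
have Hsub : {subset map Z (iota 0 a) <= map Z (iota 0 b)}.
  move=> x /mem_pre [i Hi ->]; apply: mem_pre2; exact: leq_trans Hi Hab.
have Hb1 : b.-1 < b by rewrite ltn_predL.
have := Hanti _ _ Ha Hb Hsub (Z b.-1) (mem_pre2 _ Hb1).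
case/mem_pre => i Hi /(incr_inj HZ) E.
apply/eqP; rewrite eqn_leq Hab /=; rewrite -E in Hi.
by rewrite -(prednK Hb0).
Qed.

Lemma UQ2 Z a b : incr Z -> B (map Z (iota 0 a)) -> B (map Z (iota 0 b)) ->
  0 < a -> 0 < b -> a = b.
Proof.
move=> HZ Ha Hb Ha0 Hb0; case: (leqP a b) => H; first exact: UQ Ha Hb H Hb0.
by symmetry; apply: UQ Hb Ha (ltnW H) Ha0.
Qed.

Definition hA Z := f (sZ Z).

Lemma hA_clo : clo hA VA.
Proof.
move=> Z HZ; case: (sZP HZ) => HB1 [E1 P1].
exists (size (sZ Z)) => Z' HZ' Ag.
case: (sZP HZ') => HB2 [E2 P2].
have E3 : sZ Z = map Z' (iota 0 (size (sZ Z))) by rewrite {1}E1; exact: map_agree.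
rewrite E3 in HB1.
have Es := UQ2 (sub_incr HZ') HB1 (eq_ind _ B HB2 _ E2) P1 P2.
by rewrite /hA E2 -Es -E3.
Qed.

Lemma hA_bad Z : sub Z VA -> ~ le (hA Z) (hA (sh Z)).
Proof.
move=> HZ; have HZi := sub_incr HZ.
have HsZ : sub (sh Z) VA := sub_trans (sub_sh HZi) HZ.
case: (sZP HZ) => HB1 [E1 P1]; case: (sZP HsZ) => HB2 [E2 P2].
apply: Hbadf => //.
set a := size (sZ Z) in E1 P1; set b := size (sZ (sh Z)) in E2 P2.
have Esh : map (sh Z) (iota 0 b) = map Z (iota 1 b).
  by rewrite (iotaDl 1 0 b) -map_comp; apply: eq_map => x; rewrite /sh /= add1n.
have Hab : a <= b.
  rewrite leqNgt; apply/negP => Hlt.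
  case: HB => _ [_ [Hanti _]].
  have Hsub : {subset sZ (sh Z) <= sZ Z}.
    rewrite E2 Esh E1 => x /mapP [i]; rewrite mem_iota => /andP[H1 H2] ->.
    by apply: mem_pre2; lia.
  have := Hanti _ _ HB2 HB1 Hsub (Z 0); rewrite {1}E1 mem_pre2 // => /(_ isT).
  rewrite E2 Esh => /mapP [i]; rewrite mem_iota => /andP[H1 _] /(incr_inj HZi) E.
  by rewrite -E in H1.
exists (map Z (iota 0 b.+1)); split; first exact/sorted_map_incr/iota_ltn_sorted.
split.
  exists a; split; first by rewrite size_map size_iota ltnS.
  by rewrite -map_take take_iota (minn_idPl (leqW Hab)) {1}E1.
split => //.
by rewrite E2 Esh.
Qed.

End Glue.

Lemma wqo_bqo (T : Type) (le : T -> T -> Prop) : interval_order le -> wqo le -> bqo le.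
Proof.
move=> Hio [Hwf Hac] B HB f; apply: NNPP => Hng.
have H22 := interval_22 Hio.
case: Hio => [[[Hrefl Htrans] Hanti] _].
have Hbadf : forall s t, B s -> B t -> shift_rel s t -> ~ le (f s) (f t).
  by move=> s t Hs Ht Hst Hle; apply: Hng; exists s, t.
exact: (MT Hrefl Htrans Hanti H22 Hwf Hac (VA_incr HB) (@hA_clo T B HB f) (@hA_bad T le B HB f Hbadf)).
Qed.

Definition B1 (s : seq nat) := exists n, s = [:: n].

Lemma B1_barrier : barrier B1.
Proof.
split; first by move=> s [n ->].
split.
  move=> [l Hl].
  pose n := (sumn (map (head 0) l)).+1.
  have H := Hl [:: n] (ex_intro _ n erefl).
  have H2 : n \in map (head 0) l by apply: (map_f (head 0) H).
  by have := sumn_ge H2; rewrite /n ltnn.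
split.
  move=> s t [a ->] [b ->] Hsub x Hx.
  have Hab : a = b by have := Hsub a (mem_head _ _); rewrite inE => /eqP.
  by rewrite Hab.
move=> X HX _.
case: (ex_min (P := X) _) => [|m [Hm Hmin]].
  by case: (HX 0) => n [_ Hn]; exists n.
exists [:: m]; split; first by exists m.
split => //; split => //; split.
  by move=> x; rewrite inE => /eqP ->.
move=> x Hx /= Hxm; rewrite inE eqn_leq Hxm; exact: Hmin.
Qed.

Lemma shift_B1 i j : shift_rel [:: i] [:: j] -> i < j.
Proof.
move=> [r [Hs [[k [Hk Ht]] [Hne Hb]]]].
case: r Hs Hk Ht Hne Hb => [|x [|y [|z r]]] //= Hs Hk Ht _ [->].
case: k Hk Ht => [|[|k]] //= _ [->].
by move: Hs => /= /andP[].
Qed.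

Lemma bqo_wqo (T : Type) (le : T -> T -> Prop) : interval_order le -> bqo le -> wqo le.
Proof.
move=> [[[Hrefl Htrans] Hanti] _] Hb.
have key : forall g : nat -> T, exists i j, i < j /\ le (g i) (g j).
  move=> g; case: (Hb B1 B1_barrier (fun s => g (head 0 s))) =>
    s [t [[i ->] [[j ->] [Hst Hle]]]].
  by exists i, j; split => //; exact: shift_B1.
split.
  move=> [g Hg]; case: (key g) => i [j [Hij Hle]].
  have : forall j, i < j -> ~ le (g i) (g j).
    elim=> // j' IH; rewrite ltnS leq_eqVlt => /orP[/eqP<-|Hij'].
      exact: (Hg i).2.
    move=> H; apply: (IH Hij'); exact: Htrans H (Hg j').1.
  by move/(_ j Hij).
move=> [g Hg]; case: (key g) => i [j [Hij Hle]].
by apply: (Hg i j) => //; move=> E; rewrite E ltnn in Hij.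
Qed.

Theorem theorem1p6 (T : Type) (le : T -> T -> Prop) :
  interval_order le -> (bqo le <-> wqo le).
Proof.
move=> Hio; split; [exact: bqo_wqo| exact: wqo_bqo].
Qed.
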